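(* Let $(m,q,d,\tau)$ be suitable parameters (in the sense defined in the context) and let $\Pi$ be the shifted projection protocol for these parameters. Then $\Pi$ is informative and perfectly safe.
   Context: Agents: $\mathcal A=\{A,B_1,\dots,B_m\}$, speaking in the fixed order $A,B_1,\dots,B_m$. A distribution type is a vector $\tau=(\tau_P)_{P\in\mathcal A}$ of positive integers, $|\tau|=\sum_P\tau_P$. The deck $\Omega$ is a set of $|\tau|$ cards; a deal of type $\tau$ is a partition $H=(H_P)_{P\in\mathcal A}$ of $\Omega$ with $|H_P|=\tau_P$ ($H_P$ is the hand of $P$). Suitable parameters: $(m,q,d,\tau)$ with $m>1$, $q>m$ a prime power, $d>0$ an integer, $\tau$ a distribution type over $\mathcal A$ with $|\tau|=q^{d+1}$, $\tau_A=q^{d+1}-q^d$ and $\tau_{B_k}>q^{d-1}$ for every $k\in[1,m]$; the deck $\Omega$ has $q^{d+1}$ cards. Geometry over the field $\mathbb F_q$: a transversal hyperplane of $\mathbb F_q^{d+1}$ is the set of points $x$ with $x_{d+1}=a_1x_1+\dots+a_dx_d+b$ for some $a_1,\dots,a_d,b\in\mathbb F_q$; its slope is $\sigma(V)=(a_1,\dots,a_d)\in\mathbb F_q^d$. Let $\pi:\mathbb F_q^{d+1}\to\mathbb F_q^d$ be projection onto the first $d$ coordinates; for a transversal hyperplane $V$, $\pi|_V$ is a bijection onto $\mathbb F_q^d$ with inverse $\iota_V$. Define $\pi^V_{\downarrow}:V\to\mathbb F_q^d$, $\pi^V_\downarrow(w)=\pi(w)+\sigma(V)$, and $\pi^V_\uparrow:\mathbb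 F_q^d\to V$, $\pi^V_\uparrow(y)=\iota_V(y-\sigma(V))$. Shifted projection protocol: tokens are maps $f:\Omega\to\mathbb F_q^{d+1}$ and subsets of $\mathbb F_q^d$. A run is a finite sequence of tokens; $\rho*a$ appends $a$, $\rho_{<k}$ is the prefix of length $k$. For a deal $H$, its maximal executions are the tuples $(H,f,X_1,\dots,X_m)$ where $f:\Omega\to\mathbb F_q^{d+1}$ is a bijection such that $V=\mathbb F_q^{d+1}\setminus f[H_A]$ is a transversal hyperplane, and $X_k=\pi^V_\downarrow[f[H_{B_k}]]$ for each $k\in[1,m]$. Set $\Pi(H,\rho)$ = set of tokens $a$ such that $(H,\rho*a)$ is an initial segment of a maximal execution. An execution is a pair $(H,\rho)$, $\rho=a_0,\dots,a_n$, with $a_k\in\Pi(H,\rho_{<k})$ for all $k\le n$; $\rho$ is a run of $\Pi$ if some $(H,\rho)$ is an execution; an execution $(H,\rho)$ is terminal if $\Pi(H,\rho)=\emptyset$. Informative: for every terminal execution $(H,\rho)$ and every agent $P$, there is no execution $(H',\rho)$ with $H'\neq H$ and $H'_P=H_P$. Probability model: a deal $H$ of type $\tau$ is drawn uniformly at random; then starting from the empty run, while $\Pi(H,\rho)\ne\emptyset$ for the current run $\rho$, a token is drawn uniformly from $\Pi(H,\rho)$ and appended. For a run $\rho$, ''$\rho$'' is the event that the first $|\rho|$ tokens produced are exactly $\rho$. Perfectly safe: for every run $\rho$ of $\Pi$, every card $c\in\Omega$ and every agent $P$, $\Pr(c\in H_P\mid\rho)=\tau_P/|\tau|$. *)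

(* Defs.v *)
From HB Require Import structures.
From mathcomp Require Import all_boot all_order all_algebra.
Set Implicit Arguments. Unset Strict Implicit. Unset Printing Implicit Defensive.
Import Order.TTheory GRing.Theory Num.Theory.
Local Open Scope ring_scope.

Section ShiftedProjection.
(* m : number of B-agents; F : the field F_q (q = #|F|); Omega : the deck. *)
Variables (m d : nat) (F : finFieldType) (Omega : finType).

Definition agent := 'I_m.+1.
Definition agentA : agent := ord0.
Definition agentB (k : 'I_m) : agent := lift ord0 k.

Definition deal := {ffun Omega -> agent}.
Definition hand (h : deal) (P : agent) : {set Omega} := [set c | h c == P].
Definition is_deal (tau : agent -> nat) (h : deal) : bool :=
  [forall P : agent, #|hand h P| == tau P].

Definition point := 'rV[F]_(d.+1).
Definition dpoint := 'rV[F]_d.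

Definition sp_proj (x : point) : dpoint := \row_(i < d) x 0 (widen_ord (leqnSn d) i).

Definition hyperplane (a : dpoint) (b : F) : {set point} :=
  [set x : point | x 0 ord_max == \sum_(i < d) a 0 i * x 0 (widen_ord (leqnSn d) i) + b].

Definition transversal (V : {set point}) : bool :=
  [exists a : dpoint, exists b : F, V == hyperplane a b].

(* the slope of a transversal hyperplane (it is unique) *)
Definition slope (V : {set point}) : dpoint :=
  odflt 0 [pick a : dpoint | [exists b : F, V == hyperplane a b]].

Definition proj_down (V : {set point}) (w : point) : dpoint := sp_proj w + slope V.
Definition proj_up (V : {set point}) (y : dpoint) : point :=
  odflt 0 [pick w : point | (w \in V) && (sp_proj w == y - slope V)].

Definition token := ({ffun Omega -> point} + {set dpoint})%type.
Definition run := seq token.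

Definition bijb (f : {ffun Omega -> point}) : bool :=
  injectiveb f && [forall y : point, y \in codom f].

(* maximal executions (H, f, X_1, ..., X_m), as the run [:: f; X_1; ...; X_m] *)
Definition max_exec (h : deal) (s : run) : bool :=
  (size s == m.+1) &&
  match s with
  | inl f :: rest =>
      let V := ~: (f @: hand h agentA) in
      [&& bijb f, transversal V &
          [forall k : 'I_m,
             nth (inr set0) rest k == inr (proj_down V @: (f @: hand h (agentB k)))]]
  | _ => false
  end.

(* Pi(H, rho): tokens a such that rho*a is an initial segment of a maximal
   execution of H (maximal executions have length m+1). *)
Definition Pi (h : deal) (rho : run) : {set token} :=
  [set a : token | [exists t : (m.+1 - size (rcons rho a)).-tuple token,
                      max_exec h (rcons rho a ++ t)]].

Definition execution (h : deal) (rho : run) : bool :=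
  [forall k : 'I_(size rho), nth (inr set0) rho k \in Pi h (take k rho)].

Definition is_run (tau : agent -> nat) (rho : run) : bool :=
  [exists h : deal, is_deal tau h && execution h rho].

Definition informative (tau : agent -> nat) : Prop :=
  forall (h : deal) (rho : run), is_deal tau h -> execution h rho -> Pi h rho = set0 ->
  forall P : agent, ~ exists h' : deal,
    [/\ is_deal tau h', execution h' rho, h' <> h & hand h' P = hand h P].

(* Probability model: uniform deal of type tau, then uniform tokens. *)
Definition deal_prob (tau : agent -> nat) (h : deal) : rat :=
  if is_deal tau h then (#|[set h' : deal | is_deal tau h']|%:R)^-1 else 0.

Definition path_prob (h : deal) (rho : run) : rat :=
  \prod_(k < size rho)
     (if nth (inr set0) rho k \in Pi h (take k rho)
      then (#|Pi h (take k rho)|%:R)^-1 else 0).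

Definition prob_run (tau : agent -> nat) (rho : run) : rat :=
  \sum_(h : deal) deal_prob tau h * path_prob h rho.

Definition prob_card_run (tau : agent -> nat) (c : Omega) (P : agent) (rho : run) : rat :=
  \sum_(h : deal | h c == P) deal_prob tau h * path_prob h rho.

Definition perfectly_safe (tau : agent -> nat) : Prop :=
  forall rho : run, is_run tau rho -> forall (c : Omega) (P : agent),
    prob_card_run tau c P rho / prob_run tau rho = (tau P)%:R / (\sum_(Q : agent) tau Q)%N%:R.

End ShiftedProjection.

(* Main.v *)
Require Import Defs.
From HB Require Import structures.
From mathcomp Require Import all_boot all_order all_algebra.
From mathcomp Require Import all_fingroup.
From mathcomp Require Import ring lra.
Set Implicit Arguments. Unset Strict Implicit. Unset Printing Implicit Defensive.
Import Order.TTheory GRing.Theory Num.Theory.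

Local Open Scope ring_scope.

Definition dot {F : finFieldType} {n : nat} (u v : 'rV[F]_n) : F :=
  \sum_(i < n) u 0 i * v 0 i.

Lemma dotDl (F : finFieldType) n (u v w : 'rV[F]_n) : dot (u + v) w = dot u w + dot v w.
Proof. rewrite /dot -big_split /=; apply: eq_bigr => i _; by rewrite mxE mulrDl. Qed.
Lemma dotDr (F : finFieldType) n (u v w : 'rV[F]_n) : dot w (u + v) = dot w u + dot w v.
Proof. rewrite /dot -big_split /=; apply: eq_bigr => i _; by rewrite mxE mulrDr. Qed.
Lemma dotNl (F : finFieldType) n (u w : 'rV[F]_n) : dot (- u) w = - dot u w.
Proof. rewrite /dot -sumrN; apply: eq_bigr => i _; by rewrite mxE mulNr. Qed.
Lemma dotNr (F : finFieldType) n (u w : 'rV[F]_n) : dot w (- u) = - dot w u.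
Proof. rewrite /dot -sumrN; apply: eq_bigr => i _; by rewrite mxE mulrN. Qed.
Lemma dotZr (F : finFieldType) n (c : F) (u w : 'rV[F]_n) : dot w (c *: u) = c * dot w u.
Proof. rewrite /dot mulr_sumr; apply: eq_bigr => i _; by rewrite mxE mulrCA. Qed.
Lemma dot0r (F : finFieldType) n (w : 'rV[F]_n) : dot w 0 = 0.
Proof. rewrite /dot big1 // => i _; by rewrite mxE mulr0. Qed.
Lemma dot0l (F : finFieldType) n (w : 'rV[F]_n) : dot 0 w = 0.
Proof. rewrite /dot big1 // => i _; by rewrite mxE mul0r. Qed.
Lemma dot_delta (F : finFieldType) n (u : 'rV[F]_n) j : dot u (delta_mx 0 j) = u 0 j.
Proof.
rewrite /dot (bigD1 j) //= big1 ?addr0; first by rewrite mxE !eqxx mulr1.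
by move=> i /negbTE Hi; rewrite mxE Hi andbF mulr0.
Qed.

Lemma widen_lift d (j : 'I_d) : widen_ord (leqnSn d) j = lift ord_max j.
Proof. by apply: val_inj; rewrite /= /bump leqNgt ltn_ord. Qed.

Definition mkpt {F : finFieldType} {d : nat} (y : 'rV[F]_d) (z : F) : point d F :=
  \row_(i < d.+1) match unlift ord_max i with Some j => y 0 j | None => z end.

Lemma mkpt_proj (F : finFieldType) d (y : 'rV[F]_d) z : sp_proj (mkpt y z) = y.
Proof. by apply/rowP => j; rewrite !mxE widen_lift liftK. Qed.
Lemma mkpt_last (F : finFieldType) d (y : 'rV[F]_d) z : (mkpt y z) 0 ord_max = z.
Proof. by rewrite !mxE unlift_none. Qed.

Lemma pointP (F : finFieldType) d (x y : point d F) :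
  sp_proj x = sp_proj y -> x 0 ord_max = y 0 ord_max -> x = y.
Proof.
move=> Hp Hl; apply/rowP => i; case: (unliftP ord_max i) => [j ->|->] //.
by have := congr1 (fun v : dpoint d F => v 0 j) Hp; rewrite !mxE widen_lift.
Qed.

Lemma in_hyper (F : finFieldType) d (a : 'rV[F]_d) b x :
  (x \in hyperplane a b) = (x 0 ord_max == dot a (sp_proj x) + b).
Proof.
rewrite inE /dot; congr (_ == _ + _); apply: eq_bigr => i _; by rewrite mxE.
Qed.

Definition gmap {F : finFieldType} {d : nat} (t : 'rV[F]_d) (s : F) (x : point d F) : point d F :=
  mkpt (sp_proj x + t) (x 0 ord_max - dot t (sp_proj x) + s).

Lemma gmapK (F : finFieldType) d (t : 'rV[F]_d) s s2 :
  s + s2 + dot t t = 0 -> cancel (gmap (- t) s2) (gmap t s).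
Proof.
move=> H y; apply: pointP; rewrite /gmap !mkpt_proj ?mkpt_last.
  by rewrite addrNK.
rewrite dotNl dotDr dotNr.
have -> : s = - s2 - dot t t by apply: (addIr (s2 + dot t t)); rewrite addrA H; ring.
ring.
Qed.

Lemma gmapK' (F : finFieldType) d (t : 'rV[F]_d) s s2 :
  s + s2 + dot t t = 0 -> cancel (gmap t s) (gmap (- t) s2).
Proof.
move=> H; have := @gmapK F d (- t) s2 s; rewrite opprK; apply.
by rewrite dotNl dotNr opprK -H; ring.
Qed.

Lemma gmap_hyper (F : finFieldType) d (t a : 'rV[F]_d) s b :
  gmap t s @: hyperplane a b = hyperplane (a - t) (b + s - dot (a - t) t).
Proof.
set s2 := - s - dot t t.
have H : s + s2 + dot t t = 0 by rewrite /s2; ring.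
apply/setP => x; apply/imsetP/idP.
  case=> y; rewrite in_hyper => /eqP Hy ->.
  rewrite in_hyper /gmap mkpt_proj mkpt_last Hy ?(dotDl, dotDr, dotNl, dotNr); apply/eqP; ring.
rewrite in_hyper => /eqP Hx; exists (gmap (- t) s2 x); last by rewrite gmapK.
rewrite in_hyper /gmap mkpt_proj mkpt_last Hx /s2.
rewrite ?(dotDl, dotDr, dotNl, dotNr); apply/eqP; ring.
Qed.

Lemma hyper_inj (F : finFieldType) d (a a' : 'rV[F]_d) b b' :
  hyperplane a b = hyperplane a' b' -> a = a' /\ b = b'.
Proof.
move=> E.
have Hb : b = b'.
  have : mkpt 0 b \in hyperplane a b by rewrite in_hyper mkpt_proj mkpt_last dot0r add0r.
  by rewrite E in_hyper mkpt_proj mkpt_last dot0r add0r => /eqP.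
split=> //; apply/rowP => j.
have : mkpt (delta_mx 0 j) (a 0 j + b) \in hyperplane a b.
  by rewrite in_hyper mkpt_proj mkpt_last dot_delta.
rewrite E in_hyper mkpt_proj mkpt_last dot_delta Hb => /eqP.
by move/addIr.
Qed.

Lemma slope_hyper (F : finFieldType) d (a : 'rV[F]_d) b : slope (hyperplane a b) = a.
Proof.
rewrite /slope; case: pickP => [a' /existsP [b' /eqP E] | H] /=.
  by case: (hyper_inj E).
by have := H a; rewrite /=; case/existsP; exists b.
Qed.

Local Close Scope ring_scope.

Local Open Scope ring_scope.

Lemma fiber_card (F : finFieldType) n (del : 'rV[F]_n) (c : F) : del != 0 ->
  (#|[set y : 'rV[F]_n | dot del y == c]| * #|F| = #|F| ^ n)%N.
Proof.
move=> Hd.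
have [i Hi] : exists i, del 0 i != 0.
  apply/existsP; apply: contraR Hd; rewrite negb_exists => /forallP H.
  by apply/eqP/rowP => i; rewrite mxE; apply/eqP; have := H i; rewrite negbK.
pose e : 'rV[F]_n := (del 0 i)^-1 *: delta_mx 0 i.
have He : dot del e = 1 by rewrite dotZr dot_delta mulVf.
have Hc : forall c', #|[set y : 'rV[F]_n | dot del y == c']| = #|[set y : 'rV[F]_n | dot del y == 0]|.
  move=> c'.
  have -> : [set y : 'rV[F]_n | dot del y == c'] = (fun y => y + c' *: e) @: [set y | dot del y == 0].
    rewrite (can_imset_pre _ (addrK (c' *: e))); apply/setP => y.
    by rewrite !inE dotDr dotNr dotZr He mulr1 subr_eq0.
  by rewrite card_imset //; apply: addIr.
rewrite Hc -[in RHS](mul1n n) -card_mx.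
have -> : #|{: 'M[F]_(1, n)}| = (\sum_(y : 'rV[F]_n) 1)%N by rewrite sum1_card.
rewrite (partition_big (fun y => dot del y) predT) //=.
rewrite (eq_bigr (fun _ => #|[set y : 'rV[F]_n | dot del y == 0]|)).
  by rewrite sum_nat_const mulnC.
move=> c' _; rewrite -(Hc c') -sum1_card; apply: eq_bigl => y; by rewrite inE.
Qed.

Lemma dotC (F : finFieldType) n (u v : 'rV[F]_n) : dot u v = dot v u.
Proof. by apply: eq_bigr => i _; rewrite mulrC. Qed.

Lemma card_F_gt0 (F : finFieldType) : (0 < #|F|)%N.
Proof. by apply/card_gt0P; exists 0. Qed.

Lemma card_hyper00 (F : finFieldType) d : #|hyperplane (0 : 'rV[F]_d) 0| = (#|F| ^ d)%N.
Proof.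
have H := @fiber_card F d.+1 (delta_mx 0 ord_max) 0.
have Hne : delta_mx 0 ord_max != 0 :> 'rV[F]_d.+1.
  apply/eqP => /rowP /(_ ord_max); rewrite !mxE !eqxx /=; apply/eqP; exact: oner_neq0.
move: (H Hne); rewrite expnSr => /eqP; rewrite eqn_pmul2r ?card_F_gt0 // => /eqP.
have -> : [set y : 'rV[F]_d.+1 | dot (delta_mx 0 ord_max) y == 0] = hyperplane (0 : 'rV[F]_d) 0.
  by apply/setP => x; rewrite in_hyper dot0l !addr0 inE dotC dot_delta.
by [].
Qed.

Lemma sp_proj_inj (F : finFieldType) d (a : 'rV[F]_d) b :
  {in hyperplane a b &, injective (@sp_proj d F)}.
Proof.
move=> x y; rewrite !in_hyper => /eqP Hx /eqP Hy E; apply: pointP => //.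
by rewrite Hx Hy E.
Qed.

Lemma hyper_inter (F : finFieldType) d (a a' : 'rV[F]_d) b b' : (0 < d)%N ->
  hyperplane a b != hyperplane a' b' ->
  (#|hyperplane a b :&: hyperplane a' b'| <= #|F| ^ d.-1)%N.
Proof.
move=> Hd Hne.
have Hin : forall x, x \in hyperplane a b :&: hyperplane a' b' ->
   dot (a - a') (sp_proj x) == b' - b.
  move=> x; rewrite inE !in_hyper => /andP [/eqP H1 /eqP H2].
  apply/eqP; move: H2; rewrite H1 dotDl dotNl => H2.
  rewrite (_ : dot a _ = dot a' (sp_proj x) + b' - b); first ring.
  by rewrite -H2; ring.
case: (eqVneq a a') => [Ea | Nea].
  rewrite (_ : _ :&: _ = set0) ?cards0 //; apply/setP => x; rewrite in_set0.
  apply/negP => Hx; have := Hin x Hx; rewrite Ea subrr dot0l eq_sym subr_eq0.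
  move=> /eqP Eb; move: Hne; by rewrite Ea Eb eqxx.
have <- : #|(@sp_proj d F) @: (hyperplane a b :&: hyperplane a' b')| = #|hyperplane a b :&: hyperplane a' b'|.
  by apply: card_in_imset => x y /setIP [Hx _] /setIP [Hy _]; exact: (sp_proj_inj Hx Hy).
have Hf := @fiber_card F d (a - a') (b' - b).
rewrite subr_eq0 in Hf; move: (Hf Nea).
rewrite -[in X in _ = X](prednK Hd) expnSr => /eqP; rewrite eqn_pmul2r ?card_F_gt0 // => /eqP <-.
apply: subset_leq_card; apply/subsetP => y /imsetP [x Hx ->].
by rewrite inE Hin.
Qed.

Local Close Scope ring_scope.

Local Open Scope ring_scope.

Lemma gmap_inj (F : finFieldType) d (t : 'rV[F]_d) s : injective (gmap t s).
Proof.
apply: (can_inj (g := gmap (- t) (- s - dot t t))); apply: gmapK'; ring.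
Qed.

Lemma imsetC_inj (T : finType) (g : T -> T) (S : {set T}) :
  injective g -> g @: (~: S) = ~: (g @: S).
Proof.
move=> Hg; apply/setP => x.
have Hx : x \in codom g by apply: inj_card_onto.
have [y ->] := codomP Hx.
by rewrite mem_imset // !inE mem_imset.
Qed.

Lemma geo_trans (F : finFieldType) d (t : 'rV[F]_d) s (W : {set point d F}) :
  Defs.transversal (gmap t s @: W) = Defs.transversal W.
Proof.
apply/existsP/existsP => [[a' /existsP [b' /eqP E]] | [a /existsP [b /eqP E]]].
  set s2 := - s - dot t t.
  have HK : cancel (gmap t s) (gmap (- t) s2) by apply: gmapK'; rewrite /s2; ring.
  have -> : W = gmap (- t) s2 @: (gmap t s @: W).
    by rewrite -imset_comp (eq_imset _ HK) imset_id.
  rewrite E gmap_hyper; eexists; apply/existsP; eexists; exact: eqxx.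
by rewrite E gmap_hyper; eexists; apply/existsP; eexists; exact: eqxx.
Qed.

Lemma geo_slope (F : finFieldType) d (t : 'rV[F]_d) s (W : {set point d F}) :
  Defs.transversal W -> slope (gmap t s @: W) = slope W - t.
Proof. by case/existsP => a /existsP [b /eqP ->]; rewrite gmap_hyper !slope_hyper. Qed.

Lemma geo_proj (F : finFieldType) d (t : 'rV[F]_d) s (W T : {set point d F}) :
  Defs.transversal W ->
  proj_down (gmap t s @: W) @: (gmap t s @: T) = proj_down W @: T.
Proof.
move=> HW; rewrite -imset_comp; apply: eq_imset => x /=.
by rewrite /proj_down geo_slope // /gmap mkpt_proj addrACA subrr addr0.
Qed.

Local Close Scope ring_scope.

Local Open Scope ring_scope.

Lemma bijb_comp (d : nat) (F : finFieldType) (Omega : finType)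
   (f : {ffun Omega -> point d F}) (g : point d F -> point d F) :
  injective g -> bijb [ffun c => g (f c)] = bijb f.
Proof.
move=> Hg; rewrite /bijb; congr andb.
  apply/injectiveP/injectiveP => H x y E; apply: H; first by rewrite !ffunE E.
  by move: E; rewrite !ffunE; apply: Hg.
apply/forallP/forallP => H y.
  have := H (g y); case/codomP => c; rewrite ffunE => /Hg ->; exact: codom_f.
have : y \in codom g by apply: inj_card_onto.
case/codomP => y0 ->; case/codomP: (H y0) => c ->.
by apply/codomP; exists c; rewrite ffunE.
Qed.

Lemma imset_ffun_comp (d : nat) (F : finFieldType) (Omega : finType)
   (f : {ffun Omega -> point d F}) (g : point d F -> point d F) (S : {set Omega}) :
  [ffun c => g (f c)] @: S = g @: (f @: S).
Proof. by rewrite -imset_comp; apply: eq_imset => c; rewrite ffunE. Qed.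

Lemma me_geo m d (F : finFieldType) (Omega : finType) (h : deal m Omega)
   (f : {ffun Omega -> point d F}) t s (r : run d F Omega) :
  max_exec h (inl [ffun c => gmap t s (f c)] :: r) = max_exec h (inl f :: r).
Proof.
rewrite /max_exec /= bijb_comp; last exact: gmap_inj.
rewrite !imset_ffun_comp -imsetC_inj; last exact: gmap_inj.
rewrite geo_trans.
case HT: (Defs.transversal _); last by rewrite !andbF.
congr [&& _, _ , _ & _].
apply: eq_forallb => k; by rewrite imset_ffun_comp geo_proj.
Qed.

Local Close Scope ring_scope.

Local Open Scope ring_scope.

Definition hp {m : nat} {Omega : finType} (pi : {perm Omega}) (h : deal m Omega) : deal m Omega :=
  [ffun c => h (pi c)].

Lemma hand_hp m (Omega : finType) (pi : {perm Omega}) (h : deal m Omega) P :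
  hand (hp pi h) P = pi @^-1: hand h P.
Proof. by apply/setP => c; rewrite !inE ffunE. Qed.

Lemma is_deal_hp m (Omega : finType) tau (pi : {perm Omega}) (h : deal m Omega) :
  is_deal tau (hp pi h) = is_deal tau h.
Proof.
by apply: eq_forallb => P; rewrite hand_hp card_preimset //; apply: perm_inj.
Qed.

Lemma me_relabel m d (F : finFieldType) (Omega : finType) (h : deal m Omega)
   (pi : {perm Omega}) (f : {ffun Omega -> point d F}) (r : run d F Omega) :
  max_exec (hp pi h) (inl [ffun c => f (pi c)] :: r) = max_exec h (inl f :: r).
Proof.
have Him : forall P, [ffun c => f (pi c)] @: hand (hp pi h) P = f @: hand h P.
  move=> P; apply/setP => x; apply/imsetP/imsetP => [[c Hc ->] | [c Hc ->]].
    by exists (pi c); rewrite ?ffunE //; move: Hc; rewrite hand_hp inE.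
  exists (pi^-1%g c); last by rewrite ffunE permKV.
  by rewrite hand_hp inE permKV.
have Hb : bijb [ffun c => f (pi c)] = bijb f.
  rewrite /bijb; congr andb.
    apply/injectiveP/injectiveP => H x y E.
      by rewrite -(permKV pi x) -(permKV pi y); congr (pi _); apply: H; rewrite !ffunE !permKV.
    by move: E; rewrite !ffunE => /H /perm_inj.
  apply: eq_forallb => y; apply/codomP/codomP => [[c]|[c ->]].
    by rewrite ffunE => ->; exists (pi c).
  by exists (pi^-1%g c); rewrite ffunE permKV.
rewrite /max_exec /= Hb Him; congr [&& _, _, _ & _]; apply: eq_forallb => k; by rewrite Him.
Qed.

Lemma PiP m d (F : finFieldType) (Omega : finType) (h : deal m Omega)
   (rho : run d F Omega) a :
  reflect (exists t, max_exec h (rcons rho a ++ t)) (a \in Pi h rho).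
Proof.
rewrite inE; apply: (iffP existsP) => [[t Ht] | [t Ht]]; first by exists (tval t).
have Hs : size t == (m.+1 - size (rcons rho a))%N.
  move: Ht; rewrite /max_exec => /andP [/eqP Hs _].
  by rewrite -Hs size_cat addKn.
by exists (Tuple Hs).
Qed.

Lemma me_inr m d (F : finFieldType) (Omega : finType) (h : deal m Omega) X (t : run d F Omega) :
  max_exec h (inr X :: t) = false.
Proof. by rewrite /max_exec andbF. Qed.

Lemma me_nil m d (F : finFieldType) (Omega : finType) (h : deal m Omega) :
  @max_exec m d F Omega h [::] = false.
Proof. by []. Qed.

Definition rl {d : nat} {F : finFieldType} {Omega : finType} (pi : {perm Omega})
  (a : token d F Omega) : token d F Omega :=
  match a with inl f => inl [ffun c => f (pi c)] | inr X => inr X end.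

Lemma rl_inj d (F : finFieldType) (Omega : finType) (pi : {perm Omega}) :
  injective (@rl d F Omega pi).
Proof.
move=> [f|X] [f'|X'] //= [] E; try by rewrite E.
congr inl; apply/ffunP => c.
by have := congr1 (fun g : {ffun Omega -> point d F} => g (pi^-1%g c)) E; rewrite !ffunE permKV.
Qed.

Lemma card_le_inj (T : finType) (A B : {set T}) (g : T -> T) :
  injective g -> (forall a, a \in A -> g a \in B) -> (#|A| <= #|B|)%N.
Proof.
move=> Hg HAB; rewrite -(card_imset A Hg); apply: subset_leq_card.
by apply/subsetP => b /imsetP [a Ha ->]; apply: HAB.
Qed.

Lemma Pi_nil_le m d (F : finFieldType) (Omega : finType) (h : deal m Omega) (pi : {perm Omega}) :
  (#|@Pi m d F Omega h [::]| <= #|@Pi m d F Omega (hp pi h) [::]|)%N.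
Proof.
apply: (@card_le_inj _ (@Pi m d F Omega h [::]) (@Pi m d F Omega (hp pi h) [::]) _ (@rl_inj d F Omega pi)).
move=> a /PiP [t Ht]; apply/PiP; exists t.
case: a Ht => [f|X] /=; last by rewrite me_inr.
by rewrite me_relabel.
Qed.

Lemma hpK m (Omega : finType) (pi : {perm Omega}) (h : deal m Omega) :
  hp (pi^-1)%g (hp pi h) = h.
Proof. by apply/ffunP => c; rewrite !ffunE permKV. Qed.

Lemma Pi_nil_card m d (F : finFieldType) (Omega : finType) (h : deal m Omega) (pi : {perm Omega}) :
  #|@Pi m d F Omega (hp pi h) [::]| = #|@Pi m d F Omega h [::]|.
Proof.
apply: anti_leq; apply/andP; split; last exact: Pi_nil_le.
have := @Pi_nil_le m d F Omega (hp pi h) (pi^-1)%g.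
by rewrite hpK.
Qed.

Lemma if_eq (b1 b2 : bool) (n1 n2 : nat) : b1 = b2 -> n1 = n2 ->
  (if b1 then (n1%:R)^-1 else 0) = (if b2 then (n2%:R)^-1 else 0) :> rat.
Proof. by move=> -> ->. Qed.

Lemma path_prob_eq m d (F : finFieldType) (Omega : finType) (h1 h2 : deal m Omega)
   (f : {ffun Omega -> point d F}) (s : run d F Omega) :
  (forall t, max_exec h1 (inl f :: t) = max_exec h2 (inl f :: t)) ->
  #|@Pi m d F Omega h1 [::]| = #|@Pi m d F Omega h2 [::]| ->
  path_prob h1 (inl f :: s) = path_prob h2 (inl f :: s).
Proof.
move=> Hme Hc.
have E0 : (inl f \in @Pi m d F Omega h1 [::]) = (inl f \in @Pi m d F Omega h2 [::]).
  by apply/PiP/PiP => [[t Ht]|[t Ht]]; exists t; move: Ht; rewrite /= Hme.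
have E1 : forall r, Pi h1 (inl f :: r) = Pi h2 (inl f :: r).
  by move=> r; apply/setP => a; apply/PiP/PiP => [[t Ht]|[t Ht]]; exists t; move: Ht; rewrite /= Hme.
rewrite /path_prob; apply: eq_bigr => [[[|k] Hk]] _; cbn [nth take nat_of_ord].
  exact: (if_eq E0 (congr1 (fun n : nat => n) Hc)).
by rewrite E1.
Qed.

Lemma safe_perm m d (F : finFieldType) (Omega : finType) (f : {ffun Omega -> point d F}) (c c' : Omega) :
  bijb f ->
  exists pi : {perm Omega}, pi c' = c /\
    forall (h : deal m Omega) t, max_exec (hp pi h) (inl f :: t) = max_exec h (inl f :: t).
Proof.
move=> /andP [/injectiveP Hinj /forallP Hsur].
pose t0 := sp_proj (f c') - sp_proj (f c).
pose s0 := f c' 0 ord_max - f c 0 ord_max + dot t0 (sp_proj (f c)).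
pose g := gmap t0 s0.
have Hg : g (f c) = f c'.
  apply: pointP; rewrite /g /gmap ?mkpt_proj ?mkpt_last /t0 /s0.
    by rewrite addrC subrK.
  ring.
pose s0f x := odflt x [pick y | f y == g (f x)].
have Hs0 : forall x, f (s0f x) = g (f x).
  move=> x; rewrite /s0f; case: pickP => [y /eqP //| H].
  by case/codomP: (Hsur (g (f x))) => y Hy; have := H y; rewrite Hy eqxx.
have inj : injective s0f.
  by move=> x y E; apply: Hinj; apply: (@gmap_inj F d t0 s0); rewrite -/g -!Hs0 E.
pose sg := perm inj.
exists (sg^-1)%g; split.
  apply: (@perm_inj _ sg); rewrite permKV permE; apply: Hinj; by rewrite Hs0 Hg.
move=> h t.
have Ef : f = [ffun x => [ffun y => g (f y)] ((sg^-1)%g x)].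
  apply/ffunP => x; rewrite !ffunE -Hs0; congr (f _).
  by rewrite -[LHS](permKV sg x) permE.
by rewrite {1}Ef me_relabel me_geo.
Qed.

Local Close Scope ring_scope.

Local Open Scope ring_scope.

Lemma hp_inj m (Omega : finType) (pi : {perm Omega}) : injective (@hp m Omega pi).
Proof. by apply: (can_inj (g := hp (pi^-1)%g)) => h; rewrite hpK. Qed.

Lemma pcr_perm m d (F : finFieldType) (Omega : finType) (tau : agent m -> nat) (c c' : Omega) P
    (rho : run d F Omega) (pi : {perm Omega}) :
  pi c' = c -> (forall h : deal m Omega, path_prob (hp pi h) rho = path_prob h rho) ->
  prob_card_run tau c P rho = prob_card_run tau c' P rho.
Proof.
move=> Hc Hpp; rewrite /prob_card_run [RHS](reindex_inj (@hp_inj m Omega pi)) /=.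
apply: eq_big => h; first by rewrite ffunE Hc.
by move=> _; rewrite Hpp /deal_prob is_deal_hp.
Qed.

Lemma sum_pcr m d (F : finFieldType) (Omega : finType) (tau : agent m -> nat) P (rho : run d F Omega) :
  \sum_(c : Omega) prob_card_run tau c P rho = (tau P)%:R * prob_run tau rho.
Proof.
rewrite /prob_card_run /prob_run.
under eq_bigr do rewrite big_mkcond.
rewrite exchange_big mulr_sumr; apply: eq_bigr => h _ /=.
rewrite -big_mkcond sumr_const mulr_natl.
case: (boolP (is_deal tau h)) => Hd.
  have HP : #|hand h P| = tau P by move/forallP: Hd => /(_ P) /eqP.
  rewrite -HP.
  by apply: congr1; apply: eq_card => c; rewrite !inE.
by rewrite /deal_prob (negbTE Hd) !mul0r !mul0rn.
Qed.

Lemma deal_prob_ge0 m (Omega : finType) tau (h : deal m Omega) : 0 <= deal_prob tau h.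
Proof. by rewrite /deal_prob; case: ifP => // _; rewrite invr_ge0 ler0n. Qed.

Lemma path_prob_ge0 m d (F : finFieldType) (Omega : finType) (h : deal m Omega) (rho : run d F Omega) :
  0 <= path_prob h rho.
Proof.
by apply: prodr_ge0 => k _; case: ifP => // _; rewrite invr_ge0 ler0n.
Qed.

Lemma prob_run_gt0 m d (F : finFieldType) (Omega : finType) tau (h0 : deal m Omega)
   (rho : run d F Omega) :
  is_deal tau h0 -> execution h0 rho -> 0 < prob_run tau rho.
Proof.
move=> Hd He.
have H1 : 0 < deal_prob tau h0.
  rewrite /deal_prob Hd invr_gt0 ltr0n; apply/card_gt0P; exists h0; by rewrite inE.
have H2 : 0 < path_prob h0 rho.
  apply: prodr_gt0 => k _; have Hk := forallP He k; rewrite Hk.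
  rewrite invr_gt0 ltr0n; apply/card_gt0P; eexists; exact: Hk.
rewrite /prob_run (bigD1 h0) //=.
have H3 : 0 <= \sum_(h | h != h0) deal_prob tau h * path_prob h rho.
  by apply: sumr_ge0 => h _; apply: mulr_ge0; [apply: deal_prob_ge0 | apply: path_prob_ge0].
have H4 := mulr_gt0 H1 H2; lra.
Qed.

Lemma path_prob_nil m d (F : finFieldType) (Omega : finType) (h : deal m Omega) :
  @path_prob m d F Omega h [::] = 1%R.
Proof. exact: big_ord0. Qed.

Lemma exec_head m d (F : finFieldType) (Omega : finType) (h : deal m Omega) a (s : run d F Omega) :
  execution h (a :: s) -> a \in Pi h [::].
Proof. move=> He; exact: (forallP He ord0). Qed.

Lemma safe_main m d (F : finFieldType) (Omega : finType) (tau : agent m -> nat) :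
  (\sum_(Q : agent m) tau Q)%N = #|Omega| -> perfectly_safe d F Omega tau.
Proof.
move=> Hsum rho /existsP [h0 /andP [Hd0 He0]] c P.
have Hpr := prob_run_gt0 Hd0 He0.
have Hinv : forall c', prob_card_run tau c P rho = prob_card_run tau c' P rho.
  move=> c'; case: rho Hpr He0 => [|a s] Hpr He0.
    have Ht : tperm c c' c' = c by rewrite tpermR.
    have HH := (@pcr_perm m d F Omega tau c c' P [::] _ Ht).
    by apply: HH => h; rewrite !path_prob_nil.
  have Ha := exec_head He0.
  case/PiP: Ha => t; case: a He0 Hpr => [f|X] He0 Hpr /=; last by rewrite me_inr.
  rewrite /max_exec /= => /andP [_ /and3P [Hb _ _]].
  have [pi [Hpi Hme]] := @safe_perm m d F Omega f c c' Hb.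
  apply: (@pcr_perm m d F Omega tau c c' P _ pi Hpi) => h.
  exact: (@path_prob_eq m d F Omega (hp pi h) h f s (Hme h) (@Pi_nil_card m d F Omega h pi)).
have Hsum2 := sum_pcr tau P rho.
have Hc : \sum_(c0 : Omega) prob_card_run tau c0 P rho = prob_card_run tau c P rho *+ #|Omega|.
  rewrite -sumr_const; apply: eq_bigr => c0 _; by rewrite -Hinv.
rewrite Hc in Hsum2.
rewrite Hsum; apply/eqP; rewrite eqr_div; last 2 first.
- exact: lt0r_neq0.
- by rewrite pnatr_eq0 -lt0n; apply/card_gt0P; exists c.
by rewrite mulr_natr Hsum2 mulrC.
Qed.

Local Close Scope ring_scope.

Local Open Scope ring_scope.

Lemma hand_disj m d (F : finFieldType) (Omega : finType) (h : deal m Omega)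
  (f : {ffun Omega -> point d F}) P Q :
  injective f -> P != Q -> f @: hand h P \subset ~: (f @: hand h Q).
Proof.
move=> Hf HPQ; apply/subsetP => x /imsetP [c Hc ->].
rewrite inE mem_imset // !inE; move: Hc; rewrite inE => /eqP ->; exact: HPQ.
Qed.

Lemma agentBA m (k : 'I_m) : agentB k != agentA m.
Proof. by rewrite eq_sym /agentB neq_lift. Qed.

Lemma proj_down_inj (F : finFieldType) d (W A B : {set point d F}) :
  Defs.transversal W -> A \subset W -> B \subset W ->
  proj_down W @: A = proj_down W @: B -> A = B.
Proof.
case/existsP => a /existsP [b /eqP HW] HA HB E.
have Hi : {in W &, injective (proj_down W)}.
  move=> x y Hx Hy; rewrite /proj_down => /addIr; rewrite HW in Hx Hy.
  exact: (sp_proj_inj Hx Hy).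
have sub : forall A B : {set point d F}, A \subset W -> B \subset W -> proj_down W @: A = proj_down W @: B ->
    A \subset B.
  move=> A' B' HA' HB' E'; apply/subsetP => x Hx.
  have : proj_down W x \in proj_down W @: B' by rewrite -E' imset_f.
  case/imsetP => y Hy Exy.
  have -> : x = y by apply: Hi => //; [exact: (subsetP HA') | exact: (subsetP HB')].
  done.
apply/eqP; rewrite eqEsubset (sub A B HA HB E) (sub B A HB HA (esym E)) //.
Qed.


Lemma uniq_deal m d (F : finFieldType) (Omega : finType) (tau : agent m -> nat)
  (h h' : deal m Omega) (rho : run d F Omega) P :
  (0 < d)%N -> (forall k : 'I_m, #|F| ^ d.-1 < tau (lift ord0 k))%N ->
  is_deal tau h -> is_deal tau h' -> max_exec h rho -> max_exec h' rho ->
  hand h' P = hand h P -> h' = h.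
Proof.
move=> Hd Htau Hdh Hdh' Hm Hm' HP.
case: rho Hm Hm' => [|[f|X] s]; first by []; last by rewrite !me_inr.
rewrite /max_exec /= => /and4P [_ Hb HT /forallP HX] /and4P [_ _ HT' /forallP HX'].
have /andP [/injectiveP Hinj _] := Hb.
set V := ~: (f @: hand h (agentA m)) in HT HX.
set V' := ~: (f @: hand h' (agentA m)) in HT' HX'.
have HVV : V = V'.
  case: (unliftP ord0 P) HP => [k ->|->] HP; last by rewrite /V /V' HP.
  apply/eqP; apply: contraT => Hne.
  move: HT HT' => /existsP [a /existsP [b /eqP Ea]] /existsP [a' /existsP [b' /eqP Ea']].
  have Hle := @hyper_inter F d a a' b b' Hd.
  rewrite -Ea -Ea' in Hle; have := Hle Hne.
  have Hsub : f @: hand h (agentB k) \subset V :&: V'.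
    rewrite subsetI /V /V'; apply/andP; split.
      exact: (@hand_disj m d F Omega h f _ _ Hinj (agentBA k)).
    rewrite -[agentB k]/(lift ord0 k) -HP.
    exact: (@hand_disj m d F Omega h' f _ _ Hinj (agentBA k)).
  move/(leq_trans (subset_leq_card Hsub)); rewrite card_imset; last exact: Hinj.
  have := forallP Hdh (agentB k) => /eqP ->.
  rewrite leqNgt Htau; exact: id.
have HA : hand h' (agentA m) = hand h (agentA m).
  apply/setP => c; rewrite -(mem_imset _ c Hinj) -[in RHS](mem_imset _ c Hinj).
  by rewrite -[LHS]negbK -[RHS]negbK -!in_setC -/V -/V' HVV.
have HB : forall k, hand h' (agentB k) = hand h (agentB k).
  move=> k; have := HX k; have := HX' k; rewrite -HVV => /eqP -> /eqP [] E.
  apply/setP => c; rewrite -(mem_imset _ c Hinj) -[in RHS](mem_imset _ c Hinj).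
  suff -> : f @: hand h' (agentB k) = f @: hand h (agentB k) by [].
  apply: (@proj_down_inj F d V) => //.
    rewrite /V -HA; exact: (@hand_disj m d F Omega h' f _ _ Hinj (agentBA k)).
  exact: (@hand_disj m d F Omega h f _ _ Hinj (agentBA k)).
have HQ : forall Q, hand h' Q = hand h Q.
  move=> Q; case: (unliftP ord0 Q) => [k ->|->]; [exact: HB | exact: HA].
apply/ffunP => c.
have : c \in hand h (h c) by rewrite inE.
rewrite -HQ inE => /eqP; exact.
Qed.

Local Close Scope ring_scope.


Lemma exists_bij (T1 T2 : finType) (S : {set T1}) (U : {set T2}) (x0 : T2) :
  #|T1| = #|T2| -> #|S| = #|U| -> exists g : T1 -> T2, injective g /\ g @: S = U.
Proof.
move=> HT HSU.
pose sO := enum S ++ enum (~: S); pose sP := enum U ++ enum (~: U).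
pose g c := nth x0 sP (index c sO).
have HsO : size sO = #|T1| by rewrite size_cat -!cardE cardsC.
have HsP : size sP = #|T2| by rewrite size_cat -!cardE cardsC.
have memO : forall c, c \in sO.
  by move=> c; rewrite mem_cat !mem_enum inE; case: (c \in S).
have uP : uniq sP.
  rewrite cat_uniq !enum_uniq andbT; apply/hasPn => x.
  by rewrite !mem_enum inE.
have Hg : injective g.
  move=> c1 c2 E.
  have Hi : index c1 sO = index c2 sO.
    apply/eqP; rewrite -(nth_uniq x0 _ _ uP) ?HsP -?HT -?HsO ?index_mem ?memO //.
    exact/eqP.
  by rewrite -(nth_index c1 (memO c1)) Hi nth_index.
exists g; split=> //.
apply/eqP; rewrite eqEcard card_imset // HSU leqnn andbT.
apply/subsetP => y /imsetP [c Hc ->].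
rewrite /g index_cat mem_enum Hc nth_cat.
have Hlt : index c (enum S) < size (enum U).
  by rewrite -cardE -HSU cardE index_mem mem_enum.
by rewrite Hlt -(mem_enum (mem U)) mem_nth.
Qed.


Local Open Scope ring_scope.
Lemma Pi_nil_ne m d (F : finFieldType) (Omega : finType) (tau : agent m -> nat) (h : deal m Omega) :
  is_deal tau h -> tau (agentA m) = (#|F| ^ d.+1 - #|F| ^ d)%N -> #|Omega| = (#|F| ^ d.+1)%N ->
  exists a, a \in @Pi m d F Omega h [::].
Proof.
move=> Hd HtA HO.
have Hpt : #|point d F| = (#|F| ^ d.+1)%N by rewrite card_mx mul1n.
have HU : #|~: hyperplane (0 : 'rV[F]_d) 0| = (#|F| ^ d.+1 - #|F| ^ d)%N.
  have := cardsC (hyperplane (0 : 'rV[F]_d) 0); rewrite card_hyper00.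
  move=> E; rewrite -Hpt -E addKn; exact: erefl.
have HA : #|hand h (agentA m)| = tau (agentA m) by apply/eqP; exact: (forallP Hd).
have [g [Hg Himg]] := @exists_bij Omega (point d F) (hand h (agentA m))
    (~: hyperplane (0 : 'rV[F]_d) 0) 0 (etrans HO (esym Hpt)) (etrans HA (etrans HtA (esym HU))).
pose f := [ffun c => g c].
have Hf : f @: hand h (agentA m) = ~: hyperplane (0 : 'rV[F]_d) 0.
  by rewrite -Himg; apply: eq_imset => c; rewrite ffunE.
have Hfi : injective f by move=> x y; rewrite !ffunE; exact: Hg.
exists (inl f); apply/PiP.
exists [seq inr (proj_down (~: (f @: hand h (agentA m))) @: (f @: hand h (agentB k))) | k <- enum 'I_m].
rewrite /max_exec /=; apply/and4P; split.
- by rewrite size_map size_enum_ord.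
- apply/andP; split; first exact/injectiveP.
  apply/forallP => y; apply: inj_card_onto => //; rewrite Hpt HO.
  exact: leqnn.
- rewrite Hf setCK; apply/existsP; exists 0; apply/existsP; exists 0; exact: eqxx.
- apply/forallP => k; rewrite (nth_map k); last by rewrite size_enum_ord.
  by rewrite nth_ord_enum.
Qed.

Local Close Scope ring_scope.


Lemma exec_last m d (F : finFieldType) (Omega : finType) (h : deal m Omega) (r : run d F Omega) a :
  execution h (rcons r a) -> a \in Pi h r.
Proof.
move=> He; have Hk : size r < size (rcons r a) by rewrite size_rcons.
have := forallP He (Ordinal Hk).
by rewrite /= nth_rcons ltnn eqxx -cats1 take_size_cat.
Qed.

Lemma inform_main m d (F : finFieldType) (Omega : finType) (tau : agent m -> nat) :
  (0 < d)%N -> (forall k : 'I_m, #|F| ^ d.-1 < tau (lift ord0 k))%N ->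
  tau (agentA m) = (#|F| ^ d.+1 - #|F| ^ d)%N -> #|Omega| = (#|F| ^ d.+1)%N ->
  informative d F Omega tau.
Proof.
move=> Hd0 Htau HtA HO h rho Hd He HPi P [h' [Hd' He' Hne HP]].
apply: Hne.
case/lastP: rho He He' HPi => [|r a] He He' HPi.
  have [a Ha] := Pi_nil_ne Hd HtA HO.
  by move: Ha; rewrite HPi in_set0.
case/PiP: (exec_last He) => [[|b t] Ht]; last first.
  have : b \in Pi h (rcons r a) by apply/PiP; exists t; rewrite cat_rcons.
  by rewrite HPi in_set0.
rewrite cats0 in Ht.
have Hs : size (rcons r a) = m.+1 by move: Ht; rewrite /max_exec => /andP [/eqP].
case/PiP: (exec_last He') => t' Ht'.
have Ht0 : t' = [::].
  apply/eqP; rewrite -size_eq0.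
  move: Ht'; rewrite /max_exec => /andP [/eqP]; rewrite size_cat Hs => E _.
  by apply/eqP; move: E; rewrite -[in RHS](addn0 m.+1) => /addnI.
rewrite Ht0 cats0 in Ht'.
exact: (uniq_deal Hd0 Htau Hd Hd' Ht Ht' HP).
Qed.


Theorem mainTheorem1 (m : nat) (F : finFieldType) (d : nat) (Omega : finType)
    (tau : 'I_m.+1 -> nat) :
  (1 < m)%N -> (m < #|F|)%N -> (0 < d)%N ->
  (forall P : 'I_m.+1, 0 < tau P)%N ->
  (\sum_(P : 'I_m.+1) tau P)%N = (#|F| ^ d.+1)%N ->
  tau ord0 = (#|F| ^ d.+1 - #|F| ^ d)%N ->
  (forall k : 'I_m, #|F| ^ d.-1 < tau (lift ord0 k))%N ->
  #|Omega| = (#|F| ^ d.+1)%N ->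
  informative d F Omega tau /\ perfectly_safe d F Omega tau.
Proof.
move=> _ _ Hd0 _ Hsum HtA Htau HO; split.
  exact: (inform_main Hd0 Htau HtA HO).
apply: safe_main; rewrite HO; exact: Hsum.
Qed.
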